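(* Let $\tilde c_g$ be the number of numerical semigroups of genus $g$ whose Frobenius number equals $3m-1$ where $m$ is the multiplicity (equivalently, the number of NSG-compositions $x_1+\cdots+x_{m-1}$ of genus $g$ with maximum $3$ and $x_{m-1}=3$). Then $\limsup_{g\to\infty}\tilde c_g^{1/g}<\omega=\frac{1+\sqrt5}2$; i.e. $\tilde C(q)=\sum_{g\ge3}\tilde c_gq^g$ converges on an open disc of radius strictly larger than $\omega^{-1}$.
   Context: A numerical semigroup is a submonoid $S\subseteq(\mathbb N,+)$ with finite complement; genus $\#(\mathbb N\setminus S)$, multiplicity $m=\min(S\setminus\{0\})$, Frobenius number $\max(\mathbb N\setminus S)$. An NSG-composition is a composition $x_1+\cdots+x_{m-1}$ of positive integers satisfying $x_{s+t}\le x_s+x_t$ and $x_{m-s-t}\le x_{m-s}+x_{m-t}+1$ for all $s,t\ge1$, $s+t<m$; its genus is $\sum x_j$. *)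

(* Defs.v *)
From HB Require Import structures.
From mathcomp Require Import all_boot all_order all_algebra.
From mathcomp Require Import all_classical all_reals all_analysis.
Set Implicit Arguments. Unset Strict Implicit. Unset Printing Implicit Defensive.

(* A numerical semigroup S ⊆ ℕ is encoded by its (finite) set of gaps
   G = ℕ \ S, viewed inside the window {0,...,N-1}:  n is a gap iff
   n < N and n ∈ G.  Every n >= N is an element of S. *)
Definition in_gap (N : nat) (G : {set 'I_N}) (n : nat) : bool :=
  [exists i in G, val i == n].

(* S = ℕ \ G is a numerical semigroup: 0 ∈ S and S is closed under +.
   (Finite complement is automatic since G is finite.) *)
Definition nsg_gapset (N : nat) (G : {set 'I_N}) : bool :=
  ~~ in_gap G 0 &&
  [forall a : 'I_N, forall b : 'I_N,
     (~~ in_gap G a && ~~ in_gap G b) ==> ~~ in_gap G (a + b)].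

Definition is_multiplicity (N : nat) (G : {set 'I_N}) (m : nat) : bool :=
  [&& 0 < m, ~~ in_gap G m &
      [forall j : 'I_N, (0 < j < m) ==> in_gap G j]].

Definition is_frobenius (N : nat) (G : {set 'I_N}) (f : nat) : bool :=
  in_gap G f && [forall j : 'I_N, in_gap G j ==> (j <= f)].

(* Frobenius number = 3 m - 1 where m is the multiplicity
   (the multiplicity is at most N since N is never a gap). *)
Definition frob_is_3m_minus_1 (N : nat) (G : {set 'I_N}) : bool :=
  [exists m : 'I_N.+1, is_multiplicity G m && is_frobenius G (3 * m - 1)].

(* c~_g : number of numerical semigroups of genus g with Frobenius number
   3m-1.  Such a semigroup has the gaps 1..m-1, so m <= g+1 and all its gaps
   are <= 3m-1 <= 3g+2 < 3g+3; hence the window N = 3g+3 contains all gaps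
   and semigroups correspond bijectively to the gap sets counted here. *)
Definition tilde_c (g : nat) : nat :=
  #|[set G : {set 'I_(3 * g + 3)} |
      [&& nsg_gapset G, #|G| == g & frob_is_3m_minus_1 G]]|.

(* Main.v *)
Require Import Defs.
From HB Require Import structures.
From mathcomp Require Import all_boot all_order all_algebra.
From mathcomp Require Import all_classical all_reals all_analysis.
From mathcomp Require Import ring lra zify.
Import Order.TTheory GRing.Theory Num.Theory.
Set Implicit Arguments. Unset Strict Implicit. Unset Printing Implicit Defensive.

Module Part1.

Definition alph : seq (nat * nat) :=
  [:: (1,2);(1,3);(2,1);(2,2);(2,3);(3,1);(3,2);(3,3)]%N.

Fixpoint allwords (n : nat) : seq (seq (nat * nat)) :=
  if n is n'.+1 then [seq rcons w a | w <- allwords n', a <- alph] else [:: [::]].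

Lemma allwordsS n : allwords n.+1 = [seq rcons w a | w <- allwords n, a <- alph].
Proof. by []. Qed.

Lemma mem_allwords n w : (w \in allwords n) = (size w == n) && all (mem alph) w.
Proof.
elim: n w => [|n IH] w.
  by rewrite /= inE; case: w.
rewrite allwordsS.
apply/idP/idP.
  case/allpairsP=> [[w' a] [hw ha ->]]; move: hw; rewrite IH => /andP[/eqP <- hall].
  by rewrite size_rcons eqxx /= all_rcons hall andbT; exact: ha.
case/lastP: w => [|w a]; first by [].
rewrite size_rcons eqSS all_rcons => /andP[hs /andP[ha hall]].
by apply/allpairsP; exists (w, a); rewrite /= IH hs hall; split...
Qed.

Lemma uniq_allwords n : uniq (allwords n).
Proof.
elim: n => [|n IH] //.
rewrite allwordsS; apply: allpairs_uniq => //.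
by move=> [w a] [w' a'] _ _ /= /rcons_inj [-> ->].
Qed.

Definition trans (a b : nat * nat) : bool :=
  ~~ ((b.1 == 3) && (a.1 == 1))%N && ~~ ((a.2 == 3) && (b.2 == 1))%N.

Definition lc (k0 : nat) (w : seq (nat*nat)) (t : nat) : bool :=
  [&& (t < k0) ==> ((nth (0,0) w t).1 != 1),
      (t == k0) ==> ((nth (0,0) w t).1 == 1) &
      (k0 < t) ==> trans (nth (0,0) w (t - k0.+1)) (nth (0,0) w t)]%N.

Definition valid k0 w := all (lc k0 w) (iota 0 (size w)).

Lemma valid_rcons k0 w a :
  valid k0 (rcons w a) = valid k0 w && lc k0 (rcons w a) (size w).
Proof.
rewrite /valid size_rcons -addn1 iotaD all_cat /= andbT add0n.
congr andb; apply: eq_in_all => t; rewrite mem_iota add0n => /andP[_ ht].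
rewrite /lc !nth_rcons ht.
case: (ltnP k0 t) => hk; last by [].
by rewrite (leq_ltn_trans (leq_subr _ _) ht).
Qed.

Definition wt (w : seq (nat*nat)) : nat := \sum_(p <- w) (p.1 + p.2)%N.

Lemma wt_rcons w a : wt (rcons w a) = (wt w + (a.1 + a.2))%N.
Proof. by rewrite /wt -cats1 big_cat /= big_seq1. Qed.

Local Open Scope ring_scope.

Section Phi.
Variable R : realFieldType.

Definition qq : R := 5/8.

Definition zf (a : nat * nat) : R :=
  if (a.1 == 1)%N then (if (a.2 == 2)%N then 9/10 else 13/20)
  else (if (a.2 == 3)%N then 4/5 else 5/4).

Lemma zf_ge0 a : 0 <= zf a.
Proof. rewrite /zf; case: ifP => _; case: ifP => _; lra. Qed.

Lemma alph_ind (P : nat * nat -> Prop) :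
  P (1,2)%N -> P (1,3)%N -> P (2,1)%N -> P (2,2)%N -> P (2,3)%N -> P (3,1)%N ->
  P (3,2)%N -> P (3,3)%N -> forall b, b \in alph -> P b.
Proof.
move=> h1 h2 h3 h4 h5 h6 h7 h8 b.
by rewrite !inE => /orP[/eqP->|/orP[/eqP->|/orP[/eqP->|/orP[/eqP->|/orP[/eqP->|/orP[/eqP->|/orP[/eqP->|/eqP->]]]]]]].
Qed.

Lemma qq_pow n : qq ^+ n = (5/8) ^+ n. Proof. by []. Qed.

Ltac numsolve :=
  rewrite /alph !big_cons big_nil /= /zf /=; rewrite /qq !exprS !expr0; lra.

Lemma num_trans (b : nat * nat) (f : bool) : b \in alph ->
  \sum_(a <- alph) (if trans b a then qq ^+ (a.1 + a.2) * (if f then zf a else 1) else 0)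
  <= zf b.
Proof.
by move: b; apply: alph_ind; case: f; numsolve.
Qed.

Lemma num_start (f : bool) (c : bool) :
  \sum_(a <- alph) (if (a.1 == 1)%N == c then qq ^+ (a.1 + a.2) * (if f then zf a else 1) else 0)
  <= 1.
Proof. by case: f; case: c; numsolve. Qed.


Lemma window_prod (F : nat -> R) (c k n : nat) :
  \prod_(0 <= t < n) (if (c <= t + k)%N then F t else 1) =
  (if (k <= c)%N && (c - k < n)%N then F (c - k)%N else 1) *
  \prod_(0 <= t < n) (if (c < t + k)%N then F t else 1).
Proof.
elim: n => [|n IH]; first by rewrite !big_geq // mulr1 ltn0 andbF.
rewrite !big_nat_recr //= IH.
have [e|ne] := eqVneq (n + k)%N c.
  subst c; rewrite leqnn ltnn leq_addl addnK ltnn ltnSn /= mul1r mulr1.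
  by rewrite mulrC.
have -> : (c <= n + k)%N = (c < n + k)%N.
  by rewrite leq_eqVlt eq_sym (negbTE ne).
rewrite -mulrA; congr (_ * _)%R.
have -> : (c - k < n.+1)%N = (c - k < n)%N || (c - k == n)%N by rewrite ltnS leq_eqVlt orbC.
case: (boolP (k <= c)%N) => hk //=.
have -> : (c - k == n)%N = false.
  apply/negP=> /eqP h; move: ne; rewrite -h subnK //; by rewrite eqxx.
by rewrite orbF.
Qed.

Variables (P k0 : nat).

Definition zz (t : nat) (a : nat * nat) : R := if (t + k0.+1 < P)%N then zf a else 1.

Definition Pz (w : seq (nat * nat)) (s : nat) : R :=
  \prod_(0 <= t < s) (if (s <= t + k0.+1)%N then zz t (nth (0,0)%N w t) else 1).

Definition Phi (s : nat) : R :=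
  \sum_(w <- allwords s) (if valid k0 w then qq ^+ wt w * Pz w s else 0).

Lemma zz_ge0 t a : 0 <= zz t a.
Proof. by rewrite /zz; case: ifP => _; [exact: zf_ge0|lra]. Qed.

Lemma Pz_ge0 w s : 0 <= Pz w s.
Proof. by rewrite /Pz; apply: prodr_ge0 => t _; case: ifP => _ //; exact: zz_ge0. Qed.

Lemma Phi0 : Phi 0 = 1.
Proof. by rewrite /Phi /= big_seq1 /valid /= /Pz big_geq // /wt big_nil mulr1 expr0. Qed.


Lemma Phi_step s : (s < P)%N -> Phi s.+1 <= Phi s.
Proof.
move=> sP; rewrite /Phi allwordsS big_allpairs_dep big_seq [X in _ <= X]big_seq.
apply: ler_sum => w; rewrite mem_allwords => /andP[/eqP sw walph].
have hnth : forall a t, (t < s)%N -> nth (0,0)%N (rcons w a) t = nth (0,0)%N w t.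
  by move=> a t ht; rewrite nth_rcons sw ht.
case: (boolP (valid k0 w)) => vw; last first.
  rewrite big1 // => a _; by rewrite valid_rcons (negbTE vw).
set Pi := \prod_(0 <= t < s) (if (s < t + k0.+1)%N then zz t (nth (0,0)%N w t) else 1).
have ePz : forall a, Pz (rcons w a) s.+1 = Pi * zz s a.
  move=> a; rewrite /Pz big_nat_recr //=.
  have -> : (s.+1 <= s + k0.+1)%N by rewrite addnS ltnS leq_addr.
  rewrite nth_rcons sw ltnn eqxx; congr (_ * _).
  apply: eq_big_nat => t /andP[_ ht]; by rewrite hnth.
have ePzw : Pz w s = (if (k0.+1 <= s)%N && (s - k0.+1 < s)%N
      then zz (s - k0.+1) (nth (0,0)%N w (s - k0.+1)) else 1) * Pi.
  by rewrite /Pz (window_prod (fun t => zz t (nth (0,0)%N w t))).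
set fac := (if _ then _ else _) in ePzw.
have key : \sum_(a <- alph) (if lc k0 (rcons w a) s then qq ^+ (a.1 + a.2) * zz s a else 0)
    <= fac.
  have elc : forall a, lc k0 (rcons w a) s =
     [&& (s < k0)%N ==> (a.1 != 1)%N, (s == k0) ==> (a.1 == 1)%N &
         (k0 < s)%N ==> trans (nth (0,0)%N w (s - k0.+1)) a].
    move=> a; rewrite /lc nth_rcons sw ltnn eqxx.
    case: (ltnP k0 s) => hk //=.
    by rewrite hnth // subnSK // leq_subr.
  rewrite /fac /zz.
  case: (ltngtP s k0) => hk.
  - apply: le_trans (num_start (s + k0.+1 < P)%N false).
    rewrite le_eqVlt; apply/orP; left; apply/eqP; apply: eq_bigr => a _.
    by rewrite elc (ltn_eqF hk) hk (leq_gtF (ltnW hk)) /=; case: (a.1 == 1)%N.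
  - have hidx : (s - k0.+1 < size w)%N by rewrite sw ltn_subrL /= (leq_ltn_trans _ hk).
    have hb : nth (0,0)%N w (s - k0.+1) \in alph by apply: (allP walph); exact: mem_nth.
    have hlt : (s - k0.+1 < s)%N by rewrite -{2}sw.
    rewrite hlt /= subnK // sP.
    apply: le_trans (num_trans (s + k0.+1 < P)%N hb).
    rewrite le_eqVlt; apply/orP; left; apply/eqP; apply: eq_bigr => a _.
    by rewrite elc (gtn_eqF hk) hk (leq_gtF (ltnW hk)) /=.
  - apply: le_trans (num_start (s + k0.+1 < P)%N true).
    rewrite le_eqVlt; apply/orP; left; apply/eqP; apply: eq_bigr => a _.
    by rewrite elc hk ltnn eqxx /=; case: (a.1 == 1)%N.
rewrite ePzw.
have Pi0 : 0 <= Pi by apply: prodr_ge0 => t _; case: ifP => _ //; exact: zz_ge0.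
have q0 : 0 <= qq ^+ wt w by apply: exprn_ge0; rewrite /qq; lra.
rewrite (_ : qq ^+ wt w * (fac * Pi) = (qq ^+ wt w * Pi) * fac); last by rewrite -mulrA [fac * Pi]mulrC.
apply: le_trans (ler_wpM2l (mulr_ge0 q0 Pi0) key).
rewrite big_distrr le_eqVlt; apply/orP; left; apply/eqP; apply: eq_bigr => a _ /=.
rewrite valid_rcons vw sw /= ePz wt_rcons exprD.
by case: (lc k0 (rcons w a) s); rewrite ?mulr0 // mulrACA.
Qed.


Lemma Phi_le1 s : (s <= P)%N -> Phi s <= 1.
Proof.
elim: s => [|s IH] hs; first by rewrite Phi0.
by apply: le_trans (Phi_step hs) (IH (ltnW hs)).
Qed.

Lemma sum_valid_le1 :
  \sum_(w <- allwords P) (if valid k0 w then qq ^+ wt w else 0) <= 1.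
Proof.
apply: le_trans (Phi_le1 (leqnn P)); rewrite /Phi le_eqVlt; apply/orP; left.
apply/eqP; apply: eq_bigr => w _; case: ifP => // _.
rewrite /Pz big1 ?mulr1 // => t _; case: ifP => // h.
by rewrite /zz ltnNge h.
Qed.

End Phi.

End Part1.
Import Part1.

Module Part2.

Record goodgp (gp : nat -> bool) (m : nat) : Prop := Good {
  g0 : ~~ gp 0;
  gadd : forall a b, ~~ gp a -> ~~ gp b -> ~~ gp (a + b);
  glow : forall j, 0 < j < m -> gp j;
  gm : ~~ gp m;
  gf : gp (3 * m - 1);
  gbig : forall y, gp y -> y <= 3 * m - 1;
  gm0 : 0 < m }.

Section Gap.
Variables (gp : nat -> bool) (m : nat).
Hypothesis HG : goodgp gp m.
Let H0 := g0 HG.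
Let Hadd := gadd HG.
Let Hlow := glow HG.
Let Hm := gm HG.
Let Hf := gf HG.
Let Hbig := gbig HG.
Let Hm0 := gm0 HG.

Lemma m_ge2 : 1 < m.
Proof.
move: Hm0 Hm Hf (Hadd (a:=m) (b:=m)); case: m => [|[|n]] // _ h1 h2 h3.
by move: (h3 h1 h1); rewrite h2.
Qed.

Lemma gp_mult j : ~~ gp (j * m).
Proof. by elim: j => [|j IH] //; rewrite mulSn Hadd. Qed.

Lemma gp_mono y : gp (y + m) -> gp y.
Proof. by apply: contraLR => h; apply: Hadd. Qed.

Definition xv (i : nat) : nat := 1 + gp (i + m) + gp (i + 2 * m).

Lemma gp_mono2 i : gp (i + 2 * m) -> gp (i + m).
Proof. by move=> h; apply: gp_mono; rewrite -addnA addnn -mul2n. Qed.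

Lemma xv3 i : (xv i == 3) = gp (i + 2 * m).
Proof.
rewrite /xv; case: (boolP (gp (i + 2 * m))) => h.
  by rewrite (gp_mono2 h).
by case: (gp (i + m)); rewrite ?addn0.
Qed.

Lemma xv1 i : (xv i == 1) = ~~ gp (i + m).
Proof.
rewrite /xv; case: (boolP (gp (i + m))) => h /=.
  by case: (gp (i + 2 * m)).
have -> : gp (i + 2 * m) = false by apply/negbTE; apply: contra h; exact: gp_mono2.
by [].
Qed.

Lemma xv2 i : (2 <= xv i) = gp (i + m).
Proof.
rewrite /xv; case: (boolP (gp (i + m))) => h //=.
have -> : gp (i + 2 * m) = false by apply/negbTE; apply: contra h; exact: gp_mono2.
by [].
Qed.

Lemma xv_bounds i : 1 <= xv i <= 3.
Proof. by rewrite /xv; case: (gp _); case: (gp _). Qed.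

Definition gpc (x : nat -> nat) (y : nat) : bool :=
  (y %% m != 0) && (if y %/ m == 0 then true else if y %/ m == 1 then 2 <= x (y %% m)
   else if y %/ m == 2 then x (y %% m) == 3 else false).

Lemma gp_char y : gp y = gpc xv y.
Proof.
rewrite /gpc.
have ey : y = y %/ m * m + y %% m by rewrite -divn_eq.
have hi : y %% m < m by rewrite ltn_pmod.
case: (eqVneq (y %% m) 0) => hi0 /=.
  by apply/negbTE; rewrite ey hi0 addn0 gp_mult.
case: (eqVneq (y %/ m) 0) => hj0.
  by rewrite ey hj0 mul0n add0n Hlow // lt0n hi0.
case: (eqVneq (y %/ m) 1) => hj1.
  by rewrite xv2 {1}ey hj1 mul1n addnC.
case: (eqVneq (y %/ m) 2) => hj2.
  by rewrite xv3 {1}ey hj2 addnC mulnC.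
have h3 : 3 <= y %/ m by move: hj0 hj1 hj2; case: (y %/ m) => [|[|[|]]].
have h3m : 3 * m <= y.
  by rewrite {1}ey; apply: leq_trans (leq_addr _ _); rewrite leq_mul2r h3 orbT.
apply/negbTE/negP => /Hbig; lia.
Qed.


Definition Pm := (m - 2)./2.

Definition word : seq (nat * nat) := [seq (xv t.+1, xv (m - 2 - t)) | t <- iota 0 Pm].

Definition kk := find (fun p : nat * nat => p.1 == 1) word.

Definition midv := xv ((m - 1)./2).

Lemma size_word : size word = Pm.
Proof. by rewrite size_map size_iota. Qed.

Lemma nth_word t : t < Pm -> nth (0,0) word t = (xv t.+1, xv (m - 2 - t)).
Proof. by move=> ht; rewrite (nth_map 0) ?size_iota // nth_iota. Qed.

Lemma in_alph u v : 1 <= u <= 3 -> 1 <= v <= 3 -> ~~ ((u == 1) && (v == 1)) -> (u, v) \in alph.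
Proof.
by case: u => [|[|[|[|u]]]] //; case: v => [|[|[|[|v]]]].
Qed.

Lemma word_letter t : t < Pm -> nth (0,0) word t \in alph.
Proof.
move=> ht; rewrite nth_word //; apply: in_alph; rewrite ?xv_bounds //.
rewrite !xv1; apply/negP => /andP[h1 h2].
have := Hadd h1 h2.
have -> : t.+1 + m + (m - 2 - t + m) = 3 * m - 1 by rewrite /Pm in ht; lia.
by rewrite Hf.
Qed.

Lemma word_in : word \in allwords Pm.
Proof.
rewrite mem_allwords size_word eqxx /=; apply/(all_nthP (0,0)) => t.
rewrite size_word => ht; exact: word_letter.
Qed.


Lemma word_valid : valid kk word.
Proof.
apply/allP => t; rewrite mem_iota add0n size_word => /andP[_ ht].
rewrite /lc; apply/and3P; split.
- apply/implyP => htk; have := before_find (0,0) htk; by rewrite /= => ->.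
- apply/implyP => /eqP htk.
  have hk : has (fun p : nat * nat => p.1 == 1) word by rewrite has_find -/kk -htk size_word.
  by rewrite htk; exact: (nth_find (0,0) hk).
- apply/implyP => hkt.
  have hkP : kk < Pm by apply: ltn_trans hkt ht.
  have hk : has (fun p : nat * nat => p.1 == 1) word by rewrite has_find -/kk size_word.
  have := nth_find (0,0) hk; rewrite -/kk nth_word //= xv1 => gk.
  set t' := t - kk.+1.
  have ht' : t' < Pm by rewrite /t'; lia.
  rewrite !nth_word //= /trans /=.
  apply/andP; split; apply/negP => /andP[h3 h1].
  + rewrite xv1 in h1; rewrite xv3 in h3.
    have := Hadd h1 gk.
    have -> : t'.+1 + m + (kk.+1 + m) = t.+1 + 2 * m by rewrite /t'; lia.
    by rewrite h3.
  + rewrite xv1 in h1; rewrite xv3 in h3.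
    have := Hadd h1 gk.
    have -> : m - 2 - t + m + (kk.+1 + m) = m - 2 - t' + 2 * m by rewrite /t' /Pm in ht ht' *; lia.
    by rewrite h3.
Qed.


Definition Iw := [seq t.+1 | t <- iota 0 Pm] ++ [seq m - 2 - t | t <- iota 0 Pm].
Definition Lw := [seq i + j * m | i <- Iw, j <- iota 0 3].

Lemma Iw_range i : i \in Iw -> 0 < i < m.
Proof.
rewrite mem_cat => /orP[] /mapP[t]; rewrite mem_iota add0n => /andP[_ ht] ->;
  rewrite /Pm in ht; have := m_ge2; lia.
Qed.

Lemma uniq_Iw : uniq Iw.
Proof.
rewrite cat_uniq; apply/and3P; split.
- rewrite map_inj_uniq ?iota_uniq //; by move=> a b [].
- apply/hasPn => x /mapP[t]; rewrite mem_iota add0n => /andP[_ ht] ->.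
  apply/negP => /mapP[t']; rewrite mem_iota add0n => /andP[_ ht'] e.
  rewrite /Pm in ht ht'; lia.
- rewrite map_inj_in_uniq ?iota_uniq // => a b; rewrite !mem_iota !add0n /Pm.
  move=> /andP[_ ha] /andP[_ hb] e; lia.
Qed.

Lemma uniq_Lw : uniq Lw.
Proof.
apply: allpairs_uniq; [exact: uniq_Iw | exact: iota_uniq |].
move=> [i j] [i' j'] hij hij'.
case/allpairsP: hij => [[a b] [ha _ [-> ->]]]; case/allpairsP: hij' => [[a' b'] [ha' _ [-> ->]]] /= e.
have hi := Iw_range ha; have hi' := Iw_range ha'.
have e1 : a = a'.
  have := congr1 (modn^~ m) e; rewrite ![_ + _ * m]addnC !modnMDl !modn_small //;
    [by case/andP: hi' | by case/andP: hi].
subst a'; congr (_, _); have := m_ge2 => hm2.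
have := congr1 (divn^~ m) e; rewrite ![_ + _ * m]addnC !divnMDl ?(ltn_trans _ hm2) //.
by rewrite divn_small ?addn0 //; case/andP: hi.
Qed.

Lemma wt_word : wt word = count gp Lw.
Proof.
have e1 : wt word = \sum_(i <- Iw) xv i.
  rewrite /Iw big_cat !big_map /wt /word big_map big_split /=.
  by [].
have e2 : \sum_(i <- Iw) xv i = \sum_(i <- Iw) \sum_(j <- iota 0 3) (gp (i + j * m) : nat).
  rewrite big_seq [RHS]big_seq; apply: eq_bigr => i hi.
  have := Iw_range hi => /andP[h0 hm].
  rewrite /xv (big_cons 0) (big_cons 0) (big_cons 0) big_nil mul0n addn0 mul1n (Hlow (j:=i)); last by rewrite h0 hm.
  by rewrite addn0 addnA.
have e3 : count gp Lw = \sum_(y <- Lw) (gp y : nat).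
  by rewrite -sum1_count big_mkcond; apply: eq_bigr => y _; case: (gp y).
by rewrite e1 e2 e3 /Lw big_allpairs_dep.
Qed.

End Gap.

Lemma xv_last gp m (HG : goodgp gp m) : xv gp m (m - 1) = 3.
Proof.
apply/eqP; rewrite xv3 //.
have -> : m - 1 + 2 * m = 3 * m - 1 by have := m_ge2 HG; lia.
exact: gf HG.
Qed.

Lemma gp_inj gp1 gp2 m (G1 : goodgp gp1 m) (G2 : goodgp gp2 m) :
  word gp1 m = word gp2 m -> midv gp1 m = midv gp2 m -> gp1 =1 gp2.
Proof.
move=> ew em y.
rewrite (gp_char G1) (gp_char G2) /gpc.
have ex : forall i, 0 < i < m -> xv gp1 m i = xv gp2 m i.
  move=> i /andP[hi0 him]; have hm2 := m_ge2 G1.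
  case: (eqVneq i (m - 1)) => [->|hne]; first by rewrite (xv_last G1) (xv_last G2).
  case: (leqP i (Pm m)) => h1.
    have ht : i.-1 < Pm m by lia.
    have := congr1 (fun w => (nth (0,0) w i.-1).1) ew; rewrite /= !nth_word //=.
    by rewrite prednK.
  case: (leqP (m - 1 - Pm m) i) => h2.
    have ht : m - 2 - i < Pm m by rewrite /Pm in h1 h2 *; lia.
    have := congr1 (fun w => (nth (0,0) w (m - 2 - i)).2) ew; rewrite /= !nth_word //=.
    by have -> : m - 2 - (m - 2 - i) = i by lia.
  have -> : i = (m - 1)./2 by rewrite /Pm in h1 h2; lia.
  exact: em.
case: (eqVneq (y %% m) 0) => [->|hne] //=.
have hy : 0 < y %% m < m by rewrite lt0n hne ltn_pmod // (gm0 G1).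
by rewrite ex.
Qed.

End Part2.
Import Part2.

Module Part3.
Local Open Scope ring_scope.

Lemma sum_inj_le (R : realFieldType) (T : finType) (K : eqType) (P : pred T) (f : T -> K)
    (s : seq K) (h : K -> R) :
  {in P &, injective f} -> (forall x, P x -> f x \in s) -> uniq s ->
  (forall y, 0 <= h y) ->
  \sum_(x | P x) h (f x) <= \sum_(y <- s) h y.
Proof.
move=> finj fs us h0.
rewrite -big_filter -(big_map f predT h).
set s0 := map f _.
have us0 : uniq s0.
  rewrite map_inj_in_uniq ?filter_uniq ?index_enum_uniq //.
  by move=> x y; rewrite !mem_filter => /andP[px _] /andP[py _]; apply: finj.
rewrite [X in _ <= X](bigID (mem s0) predT) /= -[X in X <= _]addr0.
apply: lerD; last by apply: sumr_ge0 => y _; exact: h0.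
rewrite -[X in _ <= X]big_filter le_eqVlt; apply/orP; left; apply/eqP.
apply: perm_big; apply: uniq_perm => //; first exact: filter_uniq.
move=> y; rewrite mem_filter; apply/idP/andP => [ys0|[]//]; split => //.
by move: ys0 => /mapP[x]; rewrite mem_filter => /andP[px _] ->; apply: fs.
Qed.

Section GapSets.
Variable N : nat.
Implicit Types (G : {set 'I_N}).

Lemma in_gapP G n : reflect (exists2 i, i \in G & val i = n) (in_gap G n).
Proof.
apply: (iffP existsP) => [[i /andP[iG /eqP e]]|[i iG e]]; first by exists i.
by exists i; rewrite iG e eqxx.
Qed.

Lemma in_gap_lt G n : in_gap G n -> (n < N)%N.
Proof. by case/in_gapP => i _ <-; exact: ltn_ord. Qed.

Lemma in_gap_ord G (i : 'I_N) : in_gap G i = (i \in G).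
Proof.
apply/in_gapP/idP => [[j jG ej]|iG]; last by exists i.
by rewrite (_ : i = j) //; apply: val_inj.
Qed.

Lemma good_of G (m : 'I_N.+1) : nsg_gapset G -> is_multiplicity G m ->
  is_frobenius G (3 * m - 1) -> goodgp (in_gap G) m.
Proof.
move=> /andP[h0 /forallP hadd] /and3P[m0 mS /forallP mlow] /andP[hf /forallP hbig].
have hmN : (m <= N)%N by rewrite -ltnS ltn_ord.
split => //.
- move=> a b ha hb; case: (ltnP a N) => haN; last first.
    by apply/negP => /in_gap_lt; apply/negP; rewrite -leqNgt (leq_trans haN) ?leq_addr.
  case: (ltnP b N) => hbN; last first.
    by apply/negP => /in_gap_lt; apply/negP; rewrite -leqNgt (leq_trans hbN) ?leq_addl.
  have := hadd (Ordinal haN) => /forallP /(_ (Ordinal hbN)) /=.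
  by rewrite ha hb => /implyP; apply.
- move=> j hj; have hjN : (j < N)%N by case/andP: hj => _ h; exact: leq_trans h hmN.
  by have := mlow (Ordinal hjN); rewrite /= hj.
- move=> y hy; have hyN := in_gap_lt hy.
  by have := hbig (Ordinal hyN); rewrite /= hy.
Qed.

Lemma count_gap_le G s : uniq s -> (count (in_gap G) s <= #|G|)%N.
Proof.
move=> us; rewrite -size_filter cardE -(size_map val).
apply: uniq_leq_size; first exact: filter_uniq.
move=> y; rewrite mem_filter => /andP[/in_gapP[i iG <-] _].
by apply: map_f; rewrite mem_enum.
Qed.

End GapSets.

Section Count.
Variable g : nat.

Definition Sg := [set G : {set 'I_(3 * g + 3)} |
      [&& nsg_gapset G, #|G| == g & frob_is_3m_minus_1 G]].

Definition mG (G : {set 'I_(3 * g + 3)}) : nat :=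
  if [pick m : 'I_(3 * g + 3).+1 | is_multiplicity G m && is_frobenius G (3 * m - 1)]
  is Some m then val m else 0.

Lemma mG_spec G : G \in Sg -> goodgp (in_gap G) (mG G) /\ (mG G <= 3 * g + 3)%N.
Proof.
rewrite inE => /and3P[hn _ /existsP[m0 hm0]].
rewrite /mG; case: pickP => [m /andP[h1 h2]|/(_ m0)]; last by rewrite hm0.
by split; [exact: good_of | rewrite -ltnS ltn_ord].
Qed.

Definition wG G := word (in_gap G) (mG G).

Definition keyG G : 'I_(3 * g + 3).+1 * 'I_(3 * g + 3).+1 * 'I_4 :=
  (inord (mG G), inord (kk (in_gap G) (mG G)), inord (midv (in_gap G) (mG G))).

Lemma wG_le G : G \in Sg -> (wt (wG G) <= g)%N.
Proof.
move=> hG; have [HG _] := mG_spec hG.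
move: hG; rewrite inE => /and3P[_ /eqP hg _].
by rewrite -[X in (_ <= X)%N]hg /wG (wt_word HG) count_gap_le // (uniq_Lw HG).
Qed.

Lemma keyG_inj G1 G2 : G1 \in Sg -> G2 \in Sg -> keyG G1 = keyG G2 -> wG G1 = wG G2 -> G1 = G2.
Proof.
move=> h1 h2 ek ew.
have [HG1 b1] := mG_spec h1; have [HG2 b2] := mG_spec h2.
have em : mG G1 = mG G2.
  by have := congr1 (fun k => val k.1.1) ek; rewrite /= !inordK // ltnS.
have emid : midv (in_gap G1) (mG G1) = midv (in_gap G2) (mG G2).
  have := congr1 (fun k => val k.2) ek; rewrite /= !inordK // ltnS.
    by case/andP: (xv_bounds (in_gap G2) (mG G2) ((mG G2 - 1)./2)).
  by case/andP: (xv_bounds (in_gap G1) (mG G1) ((mG G1 - 1)./2)).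
move: HG1 ew emid; rewrite /wG em => HG1 ew emid.
have := gp_inj HG1 HG2 ew emid => e.
apply/setP => i; by rewrite -!in_gap_ord e.
Qed.


Lemma keyG_val G : G \in Sg ->
  [/\ val (keyG G).1.1 = mG G, val (keyG G).1.2 = kk (in_gap G) (mG G) &
      val (keyG G).2 = midv (in_gap G) (mG G)].
Proof.
move=> hG; have [HG b] := mG_spec hG.
rewrite /keyG /= !inordK // ?ltnS //.
- by case/andP: (xv_bounds (in_gap G) (mG G) ((mG G - 1)./2)).
- apply: leq_trans (find_size _ _) _; rewrite size_word /Pm; lia.
Qed.

Lemma tilde_bound (R : realFieldType) :
  (tilde_c g)%:R <= (8/5 : R) ^+ g * (((3 * g + 3).+1 * (3 * g + 3).+1 * 4)%N)%:R.
Proof.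
rewrite /tilde_c -/Sg -sum1_card natr_sum.
have q0 : 0 <= qq R by rewrite /qq; lra.
have q1 : qq R <= 1 by rewrite /qq; lra.
apply: le_trans (_ : _ <= (8/5 : R) ^+ g * \sum_(G in Sg) qq R ^+ wt (wG G)) _.
  rewrite mulr_sumr; apply: ler_sum => G hG.
  have h1 : (8/5 : R) ^+ g * qq R ^+ g = 1 by rewrite -exprMn /qq (_ : 8/5 * (5/8) = 1 :> R) ?expr1n //; field.
  apply: (@le_trans _ _ ((8/5 : R) ^+ g * qq R ^+ g)); first by rewrite h1.
  apply: ler_wpM2l; first by apply: exprn_ge0; lra.
  exact: ler_wiXn2l (wG_le hG).
apply: ler_wpM2l; first by apply: exprn_ge0; lra.
rewrite (_ : ((3 * g + 3).+1 * (3 * g + 3).+1 * 4)%N =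
   #|{: 'I_(3 * g + 3).+1 * 'I_(3 * g + 3).+1 * 'I_4}|); last by rewrite !card_prod !card_ord.
rewrite (partition_big keyG predT) //= -sum1_card natr_sum; apply: ler_sum => j _.
set m := val j.1.1; set k0 := val j.1.2.
apply: le_trans (sum_valid_le1 R (Pm m) k0).
have -> : \sum_(G in Sg | keyG G == j) qq R ^+ wt (wG G) =
    \sum_(G in Sg | keyG G == j) (fun w => if valid k0 w then qq R ^+ wt w else 0) (wG G).
  apply: eq_bigr => G /andP[hG /eqP hk].
  have [HG _] := mG_spec hG; have [e1 e2 _] := keyG_val hG.
  rewrite /= /wG /k0 -hk e2 (word_valid HG) //.
apply: sum_inj_le.
- move=> G1 G2 /andP[h1 /eqP k1] /andP[h2 /eqP k2] ew.
  by apply: keyG_inj => //; rewrite k1 k2.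
- move=> G /andP[hG /eqP hk]; have [HG _] := mG_spec hG; have [e1 _ _] := keyG_val hG.
  by rewrite /wG /m -hk e1 (word_in HG).
- exact: uniq_allwords.
- move=> w; case: ifP => _ //; apply: exprn_ge0; exact: q0.
Qed.

End Count.

End Part3.
Import Part3.

Module Part4.
Local Open Scope ring_scope.

Lemma limsup_le (R : realType) (u : nat -> \bar R) (M : \bar R) N0 :
  (forall n, (N0 <= n)%N -> (u n <= M)%E) -> (limn_esup u <= M)%E.
Proof.
move=> hu; rewrite limn_esup_lim.
have -> : limn (esups u) = ereal_inf (range (esups u)) by apply: cvg_lim => //; exact: cvg_esups_inf.
apply: (@le_trans _ _ (esups u N0)).
  by apply: ereal_inf_lbound; exists N0.
apply: ge_ereal_sup => _ [k hk <-]; exact: hu.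
Qed.

Lemma bern (R : realFieldType) (x : R) n : 0 <= x -> 1 + n%:R * x <= (1 + x) ^+ n.
Proof.
move=> x0; elim: n => [|n IH]; first by rewrite mul0r addr0 expr0.
rewrite exprS -natr1.
have h1 : 0 <= 1 + x by lra.
apply: le_trans (ler_wpM2l h1 IH).
have : 0 <= n%:R * x * x by apply: mulr_ge0 => //; apply: mulr_ge0.
lra.
Qed.

Lemma sqrt5_bound (R : realType) : (161/100 : R) < (1 + Num.sqrt 5) / 2.
Proof.
have h0 : 0 <= Num.sqrt (5 : R) by exact: sqrtr_ge0.
have h1 : Num.sqrt (5 : R) * Num.sqrt 5 = 5 by rewrite -expr2 sqr_sqrtr //; lra.
nra.
Qed.

End Part4.
Import Part4.

Module Part5.
Local Open Scope ring_scope.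

Lemma poly_exp (R : realFieldType) (g : nat) (c : R) : c = 160 ^+ 3 ->
  3 * (1444 * c) + 3 <= (g%:R : R) ->
  (((3 * g + 3).+1 * (3 * g + 3).+1 * 4)%N)%:R <= (161/160 : R) ^+ g.
Proof.
move=> ec hg.
set jn := (g %/ 3)%N.
have hg3 : (g <= 3 * jn + 2)%N by rewrite /jn; lia.
have hg3' : (3 * jn <= g)%N by rewrite /jn; lia.
set j : R := jn%:R.
have rg3 : (g%:R : R) <= 3 * j + 2.
  by rewrite /j (_ : 3 * jn%:R + 2 = (3 * jn + 2)%N%:R :> R) ?ler_nat // natrD natrM.
have c1 : 1 <= c by rewrite ec; apply: exprn_ege1; lra.
have rjA : 1444 * c <= j by lra.
have rj1 : 1 <= j by nra.
have e1 : (161/160 : R) ^+ (3 * jn) <= (161/160) ^+ g.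
  by rewrite ler_eXn2l //; lra.
apply: (le_trans _ e1); rewrite (mulnC 3 jn) exprM.
have e2 : 1 + jn%:R * (1/160) <= (161/160 : R) ^+ jn.
  by rewrite (_ : (161/160 : R) = 1 + 1/160); [exact: bern | lra].
have e3 : (1 + j * (1/160)) ^+ 3 <= ((161/160 : R) ^+ jn) ^+ 3.
  by apply: lerXn2r => //; rewrite nnegrE; lra.
apply: (le_trans _ e3).
have ec3 : j ^+ 3 / c <= (1 + j * (1/160)) ^+ 3.
  rewrite ec -expr_div_n; apply: lerXn2r; rewrite ?nnegrE; lra.
apply: (le_trans _ ec3).
have c0 : 0 < c by lra.
rewrite ler_pdivlMr // -addnS !natrM natrD natrM.
have hK : ((3 * g%:R + 4%:R) * (3 * g%:R + 4%:R) * 4%:R : R) <= 1444 * j ^+ 2.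
  rewrite expr2; nra.
apply: le_trans (ler_wpM2r (ltW c0) hK) _.
have j0 : 0 <= j ^+ 2 by rewrite exprn_ge0 //; lra.
have := ler_wpM2l j0 rjA.
move=> h.
rewrite (_ : 1444 * j ^+ 2 * c = j ^+ 2 * (1444 * c)); last by ring.
by rewrite (_ : j ^+ 3 = j ^+ 2 * j); last by ring.
Qed.


End Part5.
Import Part5.

Unset Implicit Arguments.
Local Open Scope ring_scope.
Local Open Scope ereal_scope.

Theorem theorem13p2 (R : realType) :
  limn_esup (fun g : nat => ((tilde_c g)%:R `^ (g%:R^-1) : R)%:E)
    < ((1 + Num.sqrt 5) / 2 : R)%:E.
Proof.
set c : R := (160 ^+ 3)%R.
set X : R := (3 * (1444 * c) + 3)%R.
have c0 : (0 <= c)%R by rewrite /c exprn_ge0.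
have X0 : (0 < X)%R by rewrite /X; lra.
have [N0 hN0] : exists N0 : nat, (X < N0%:R)%R.
  by exists (Num.bound X); apply: archi_boundP; exact: ltW.
apply: (@le_lt_trans _ _ ((161/100 : R)%:E)); last by rewrite lte_fin sqrt5_bound.
apply: (@limsup_le _ _ _ N0) => g hg.
rewrite lee_fin.
have hgX : (X <= g%:R)%R by apply: ltW; apply: lt_le_trans hN0 _; rewrite ler_nat.
have gpos : (0 < g%:R :> R)%R by apply: lt_le_trans X0 hgX.
have hc : ((tilde_c g)%:R <= (161/100 : R) ^+ g)%R.
  apply: le_trans (tilde_bound g R) _.
  rewrite (_ : (161/100 : R) = 8/5 * (161/160))%R; last by field.
  rewrite (@exprMn R g (8/5)%R (161/160)%R); apply: ler_wpM2l; first by apply: exprn_ge0; lra.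
  exact: (@poly_exp R g c).
have r0 : (0 <= (161/100 : R))%R by lra.
apply: le_trans (@ge0_ler_powR R (g%:R^-1) _ _ _ _ _ hc) _.
- by rewrite invr_ge0 ltW.
- by rewrite nnegrE.
- by rewrite nnegrE exprn_ge0.
rewrite -powR_mulrn // -powRrM mulfV ?powRr1 //.
by rewrite gt_eqF.
Qed.
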